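(* Let $p$ be a prime and let $A$, $B$ be $p$-groups with $|A|=p^a$, $|B|=p^b$, $a,b\geq 1$. Let $p^d$ be the maximum order of an element of $A$. For an integer $m\ge 1$ let $s_m$ be the number of elements $g\in A$ with $g^m=1$, and for a divisor $n$ of $|B|$ let $d_n$ be the number of elements of $B$ of order $n$. For $0\le n\le b$ put $k_n=\frac{p^{-n}d_{p^{b-n}}}{a(B)}$. Then $$a(A\wr B)=p^d a(B)-(p-1)a(B)\sum_{n=0}^{b}k_n\left[\sum_{m=0}^{d-1}p^m\left(\frac{s_{p^m}}{p^a}\right)^{p^n}\right].$$ Moreover, $k_n\ge 0$ for all $n$ and $\sum_{n=0}^{b}k_n=1$.
   Context: For a finite group $G$, the average order is $a(G)=\frac{1}{|G|}\sum_{g\in G}\mathrm{order}(g)$. For groups $A,B$, let $K=\prod_{b\in B}A$, on which $B$ acts by $x\cdot(\alpha_b)_b=(\alpha_{x^{-1}b})_b$ for $x\in B$; the wreath product $A\wr B$ is the semidirect product $K\rtimes B$ for this action. *)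

(* Defs.v *)
From HB Require Import structures.
From mathcomp Require Import all_boot all_order all_algebra all_fingroup.
Set Implicit Arguments. Unset Strict Implicit. Unset Printing Implicit Defensive.
Import GRing.Theory Num.Theory.

(* Wreath product A wr B = K >< B with K = prod_{b in B} A, realised as a
   finGroupType on {ffun bT -> aT} * bT, for A = [set: aT], B = [set: bT]. *)
Section Wreath.
Variables aT bT : finGroupType.
Local Open Scope group_scope.

Definition wreath : Type := ({ffun bT -> aT} * bT)%type.
HB.instance Definition _ := Finite.copy wreath ({ffun bT -> aT} * bT)%type.

Definition wr_act (x : bT) (f : {ffun bT -> aT}) : {ffun bT -> aT} :=
  [ffun c => f (x^-1 * c)].

Definition wr_mul (u v : wreath) : wreath :=
  ([ffun c => u.1 c * wr_act u.2 v.1 c], u.2 * v.2).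
Definition wr_one : wreath := ([ffun => 1], 1).
Definition wr_inv (u : wreath) : wreath :=
  ([ffun c => (u.1 (u.2 * c))^-1], u.2^-1).

Lemma wr_mulA : associative wr_mul.
Proof.
move=> [k x] [l y] [m z]; rewrite /wr_mul /wr_act /=; congr (_, _).
  by apply/ffunP=> c; rewrite /= !ffunE /= invMg !mulgA.
by rewrite mulgA.
Qed.

Lemma wr_mul1 : left_id wr_one wr_mul.
Proof.
move=> [k x]; rewrite /wr_mul /wr_act /=; congr (_, _).
  by apply/ffunP=> c; rewrite /= !ffunE invg1 !mul1g.
by rewrite mul1g.
Qed.

Lemma wr_mulV : left_inverse wr_one wr_inv wr_mul.
Proof.
move=> [k x]; rewrite /wr_mul /wr_act /=; congr (_, _).
  by apply/ffunP=> c; rewrite /= !ffunE invgK mulVg.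
by rewrite mulVg.
Qed.

HB.instance Definition _ := Finite_isGroup.Build wreath wr_mulA wr_mul1 wr_mulV.
End Wreath.

Notation "A \wr B" := (wreath A B) (at level 40).

Definition avg_order (gT : finGroupType) : rat :=
  ((\sum_(g : gT) #[g]%g)%:R / #|gT|%:R)%R.

(* Main.v *)
Require Import Defs.
From HB Require Import structures.
From mathcomp Require Import all_boot all_order all_algebra all_fingroup.
Import GRing.Theory Num.Theory.
From mathcomp Require Import all_solvable.
From mathcomp Require Import ring lra.
Import GRing.Theory Num.Theory.

Module Aux.
Set Implicit Arguments. Unset Strict Implicit. Unset Printing Implicit Defensive.




Lemma card_constr (aT bT : finType) (T : {set bT}) (S : {set aT}) :
  #|[set g : {ffun bT -> aT} | [forall t in T, g t \in S]]| = (#|S| ^ #|T| * #|aT| ^ (#|bT| - #|T|))%N.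
Proof.
pose F := fun t : bT => if t \in T then mem S else mem [set: aT].
have -> : #|[set g : {ffun bT -> aT} | [forall t in T, g t \in S]]| = #|family F|.
  apply: eq_card => g; rewrite inE; apply/forall_inP/familyP => H t.
    by rewrite /F; case: ifP => Ht; [apply: H | rewrite inE].
  by move=> Ht; have := H t; rewrite /F Ht.
rewrite card_family foldr_map.
have -> : foldr (fun x : bT => [eta muln #|[eta F x]|]) 1 (enum bT) = \prod_(x <- enum bT) #|F x|.
  by elim: (enum bT) => [|t r IH] /=; rewrite ?big_nil ?big_cons ?IH.

rewrite big_enum /= (bigID (fun t => t \in T)) /=.
rewrite (eq_bigr (fun=> #|S|)); last by move=> t Ht; rewrite /F Ht.
rewrite [X in (_ * X)%N](eq_bigr (fun=> #|aT|)); last by move=> t /negbTE Ht; rewrite /F Ht cardsT.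
rewrite !prod_nat_const; congr (_ ^ _ * _ ^ _)%N.
rewrite -(cardC T) addKn; apply: eq_card => t; rewrite !inE.
by [].
Qed.

Section Trans.
Variables (aT bT : finGroupType) (x : bT).
Local Open Scope group_scope.
Local Notation o := #[x].
Local Notation H := <[x]>%G.

Definition gprod (f : {ffun bT -> aT}) c := \prod_(i < o) f (x ^- i * c).
Definition rep c := repr (H :* c).
Definition Tr := [set c | rep c == c].

Lemma rep_mem c : rep c \in H :* c.
Proof. exact: mem_repr (rcoset_refl H c). Qed.

Lemma rep_eq c c' : c' \in H :* c -> rep c' = rep c.
Proof. by move/rcoset_eqP; rewrite /rep => ->. Qed.

Lemma rep_Tr c : rep c \in Tr.
Proof. by rewrite inE (rep_eq (rep_mem c)). Qed.

Lemma rep_exp c : exists j, rep c = x ^+ j * c.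
Proof.
by have /rcosetP[h /cycleP[j ->] ->] := rep_mem c; exists j.
Qed.

Lemma card_Tr : #|Tr| = (#|bT| %/ o)%N.
Proof.
have <- : #|[set H :* c | c in Tr]| = #|Tr|.
  apply: card_in_imset => c c'; rewrite !inE => /eqP Hc /eqP Hc' E.
  by rewrite -Hc -Hc' /rep E.
have -> : [set H :* c | c in Tr] = rcosets H [set: bT].
  apply/setP => C; apply/imsetP/rcosetsP.
    by case=> c _ ->; exists c; rewrite ?inE.
  case=> c _ ->; exists (rep c); first exact: rep_Tr.
  by symmetry; apply/rcoset_eqP; exact: rep_mem.
have := Lagrange (subsetT H); rewrite cardsT => <-; rewrite mulKn //; exact: order_gt0.
Qed.

Lemma gprod_shift f c : gprod f (x * c) = (gprod f c) ^ (f (x * c))^-1.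
Proof.
rewrite /gprod; case: o (order_gt0 x) (expg_order x) => // n _ xo.
rewrite big_ord_recl big_ord_recr /= expg0 invg1 mul1g.
have -> : x ^- n * c = x * c.
  by rewrite -[x ^- n]mulg1 -xo expgSr mulgA mulVg mul1g.
rewrite conjgE invgK mulgK; congr (_ * _); apply: eq_bigr => i _.
by rewrite /bump leq0n add1n expgS invMg !mulgA mulgKV.
Qed.

Lemma gprod_inv (S : {set aT}) (hS : forall y z, (y ^ z \in S) = (y \in S)) f c j :
  (gprod f (x ^+ j * c) \in S) = (gprod f c \in S).
Proof.
elim: j => [|j IH]; first by rewrite expg0 mul1g.
by rewrite expgS -mulgA gprod_shift hS IH.
Qed.

Lemma forall_Tr (S : {set aT}) (hS : forall y z, (y ^ z \in S) = (y \in S)) f :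
  [forall c, gprod f c \in S] = [forall t in Tr, gprod f t \in S].
Proof.
apply/forallP/forall_inP => [H t _ | H c]; first exact: H.
have [j Ej] := rep_exp c.
by rewrite -(gprod_inv hS f c j) -Ej; apply: H; apply: rep_Tr.
Qed.

Definition Phi (f : {ffun bT -> aT}) : {ffun bT -> aT} :=
  [ffun c => if c \in Tr then gprod f c else f c].

Lemma notTr c i : c \in Tr -> (0 < i < o)%N -> x ^- i * c \notin Tr.
Proof.
move=> Hc /andP[i0 io]; apply/negP => Hi.
have E : rep (x ^- i * c) = rep c.
  by apply: rep_eq; apply/rcosetP; exists (x ^- i) => //; rewrite groupV mem_cycle.
move: Hi Hc; rewrite !inE => /eqP Hi /eqP Hc.
have : x ^- i * c = 1 * c by rewrite mul1g -{2}Hc -E Hi.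
move/mulIg/eqP; rewrite invg_eq1 -order_dvdn => /dvdn_leq.
by move=> /(_ i0); rewrite leqNgt io.
Qed.

Lemma Phi_inj : injective Phi.
Proof.
move=> f1 f2 E.
have off c : c \notin Tr -> f1 c = f2 c.
  by move=> Hc; have := congr1 (fun g : {ffun bT -> aT} => g c) E; rewrite /= !ffunE (negbTE Hc).
apply/ffunP => c; case: (boolP (c \in Tr)) => Hc; last exact: off.
have := congr1 (fun g : {ffun bT -> aT} => g c) E; rewrite /= !ffunE Hc /gprod.
have [n on] : exists n, o = n.+1 by exists o.-1; rewrite prednK // order_gt0.
rewrite on !big_ord_recl /= expg0 invg1 !mul1g.
rewrite (eq_bigr (fun i : 'I_n => f2 (x ^- bump 0 i * c))); first by move/mulIg.
move=> i _; apply: off; apply: notTr => //.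
by rewrite /bump leq0n add1n /= on ltnS ltn_ord.
Qed.

Lemma count_S (S : {set aT}) (hS : forall y z, (y ^ z \in S) = (y \in S)) :
  #|[set f : {ffun bT -> aT} | [forall c, gprod f c \in S]]| =
  (#|S| ^ (#|bT| %/ o) * #|aT| ^ (#|bT| - #|bT| %/ o))%N.
Proof.
rewrite -card_Tr -card_constr -[RHS](card_preimset _ Phi_inj).
apply: eq_card => f; rewrite !inE forall_Tr //.
by apply: eq_forallb => t; rewrite ffunE; case: (t \in Tr).
Qed.
End Trans.
Section W.
Variables aT bT : finGroupType.
Local Open Scope group_scope.
Implicit Types (f : {ffun bT -> aT}) (x c : bT).

Lemma wr_mulE (u v : aT \wr bT) : u * v = ([ffun c => u.1 c * v.1 (u.2^-1 * c)], u.2 * v.2).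
Proof. by congr (_, _); apply/ffunP => c; rewrite !ffunE. Qed.

Lemma wr_oneE : (1 : aT \wr bT) = ([ffun => 1], 1).
Proof. by []. Qed.

Lemma wr_expE f x n : ((f, x) : aT \wr bT) ^+ n =
  ([ffun c => \prod_(i < n) f (x ^- i * c)], x ^+ n).
Proof.
elim: n => [|n IH]; first by rewrite expg0 wr_oneE; congr (_, _); apply/ffunP=> c; rewrite !ffunE big_ord0.
rewrite expgS IH wr_mulE /=; congr (_, _); last by rewrite expgS.
apply/ffunP=> c; rewrite !ffunE big_ord_recl /=.
rewrite expg0 invg1 mul1g; congr (_ * _); apply: eq_bigr => i _.
by rewrite mulgA -invMg -expgS /bump leq0n add1n.
Qed.

Lemma wr_exp1E (h : {ffun bT -> aT}) n : ((h, 1) : aT \wr bT) ^+ n = ([ffun c => h c ^+ n], 1).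
Proof.
elim: n => [|n IH]; first by rewrite expg0 wr_oneE; congr (_, _); apply/ffunP=> c; rewrite !ffunE.
rewrite expgS IH wr_mulE /=; congr (_, _); last by rewrite mulg1.
by apply/ffunP=> c; rewrite !ffunE invg1 mul1g expgS.
Qed.
Lemma wr_pow_o f x : ((f, x) : aT \wr bT) ^+ #[x] = ([ffun c => gprod x f c], 1).
Proof. by rewrite wr_expE expg_order. Qed.

Lemma order_wr f x : #[(f, x) : aT \wr bT] =
  muln #[x] #[(([ffun c => gprod x f c], 1)) : aT \wr bT].
Proof.
have dx : (#[x] %| #[(f, x) : aT \wr bT])%N.
  have := expg_order ((f, x) : aT \wr bT); rewrite wr_expE wr_oneE.
  by move/(congr1 snd) => /= xo; rewrite order_dvdn xo.
by rewrite -wr_pow_o orderXdiv // mulnC divnK.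
Qed.

Lemma wr_exp1_eq1 (h : {ffun bT -> aT}) n :
  ((((h, 1) : aT \wr bT) ^+ n) == 1) = [forall c, h c ^+ n == 1].
Proof.
rewrite wr_exp1E wr_oneE; apply/eqP/forallP => [E c | H].
  by have := congr1 (fun u : aT \wr bT => u.1 c) E; rewrite /= !ffunE => ->.
by congr (_, _); apply/ffunP => c; rewrite !ffunE; apply/eqP.
Qed.
End W.



Local Open Scope ring_scope.
Lemma pow_ident (p e d : nat) : (e <= d)%N ->
  ((p ^ e)%N%:R : rat) = p%:R ^+ d - (p%:R - 1) * \sum_(m < d) p%:R ^+ m * (e <= m)%N%:R.
Proof.
elim: d => [|d IH]; first by rewrite leqn0 => /eqP ->; rewrite big_ord0 expr0 mulr0 subr0.
rewrite leq_eqVlt => /orP[/eqP -> | ]; last first.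
  rewrite ltnS => ed; rewrite (IH ed) big_ord_recr /= ed mulr1 exprS; ring.
  rewrite big1 ?mulr0 ?subr0 ?natrX // => m _.
  by rewrite leqNgt (ltn_ord m) mulr0.

Qed.



Lemma order_pexp (gT : finGroupType) (p b : nat) (y : gT) : prime p -> #|gT| = (p ^ b)%N ->
  exists2 e, (e <= b)%N & #[y]%g = (p ^ e)%N.
Proof.
move=> pp cT; apply/(dvdn_pfactor _ _ pp); rewrite -cT -cardsT.
by apply: order_dvdG; rewrite inE.
Qed.

Lemma regroup (bT : finGroupType) (p b : nat) (G : nat -> rat) :
  prime p -> #|bT| = (p ^ b)%N ->
  \sum_(x : bT) (#[x]%g)%:R * G (#|bT| %/ #[x]%g)%N =
  \sum_(n < b.+1) (#|[set g : bT | #[g]%g == (p ^ (b - n))%N]|)%:R * (p ^ (b - n))%N%:R * G (p ^ n)%N.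
Proof.
move=> pp cB; have p1 := prime_gt1 pp.
transitivity (\sum_(x : bT) \sum_(n < b.+1)
   (if #[x]%g == (p ^ (b - n))%N then (p ^ (b - n))%N%:R * G (p ^ n)%N else 0)).
  apply: eq_bigr => x _.
  have [e eb xe] := order_pexp x pp cB.
  have eb1 : (b - e < b.+1)%N by rewrite ltnS leq_subr.
  rewrite (bigD1 (Ordinal eb1)) //= subKn // xe eqxx big1 ?addr0.
    by rewrite cB -expnB ?subKn // ltnW.
  move=> n /eqP nn; rewrite eqn_exp2l //; case: eqP => // E; case: nn.
  by apply: val_inj => /=; rewrite E subKn // -ltnS.
rewrite exchange_big /=; apply: eq_bigr => n _.
rewrite -big_mkcond /= (eq_bigl (fun x => x \in [set g : bT | #[g]%g == (p ^ (b - n))%N])); last by move=> x; rewrite inE.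
by rewrite sumr_const; ring.
Qed.

Section Main.
Local Open Scope ring_scope.

Lemma per_elem (aT bT : finGroupType) (p d : nat) (f : {ffun bT -> aT}) (x : bT) :
  prime p -> (forall y : aT, (#[y]%g %| p ^ d)%N) ->
  (#[((f, x) : aT \wr bT)]%g)%:R = (#[x]%g)%:R * ((p%:R : rat) ^+ d - (p%:R - 1) *
     \sum_(m < d) p%:R ^+ m * [forall c, gprod x f c \in [set g : aT | (g ^+ (p ^ m) == 1)%g]]%:R).
Proof.
move=> pp hexp; rewrite order_wr natrM; congr (_ * _).
set q := #[_]%g.
have : (q %| p ^ d)%N.
  by rewrite order_dvdn wr_exp1_eq1; apply/forallP => c; rewrite -order_dvdn.
case/(dvdn_pfactor _ _ pp) => e ed qe.
rewrite qe (pow_ident p ed); congr (_ - _ * _); apply: eq_bigr => m _; congr (_ * (nat_of_bool _)%:R).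
rewrite -(dvdn_Pexp2l _ _ (prime_gt1 pp)) -qe order_dvdn wr_exp1_eq1.
by apply/idP/idP => /forallP H; apply/forallP => c; have := H c; rewrite ffunE inE.
Qed.
End Main.

Local Open Scope ring_scope.

Lemma wr_avg (aT bT : finGroupType) : avg_order (aT \wr bT) =
  (\sum_(u : aT \wr bT) (#[u]%g)%:R) / (#|aT| ^ #|bT| * #|bT|)%N%:R.
Proof. rewrite /avg_order natr_sum -card_ffun -card_prod. by []. Qed.

Lemma wr_sum (aT bT : finGroupType) (F : aT \wr bT -> rat) :
  \sum_(u : aT \wr bT) F u = \sum_(x : bT) \sum_(f : {ffun bT -> aT}) F (f, x).
Proof. rewrite exchange_big pair_big /=. under [RHS]eq_bigr do rewrite -surjective_pairing. rewrite (eq_bigl predT) //. Qed.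

Lemma sum_ind (T : finType) (P : pred T) : \sum_(t : T) ((P t : nat)%:R : rat) = #|[set t | P t]|%:R.
Proof.
rewrite -natr_sum -sum1_card; congr _%:R; rewrite [RHS]big_mkcond; apply: eq_bigr => t _.
by rewrite inE; case: (P t).
Qed.

Lemma pow_split (A S B r : nat) : (0 < A)%N -> (r <= B)%N ->
  ((S ^ r * A ^ (B - r))%N%:R : rat) = (A ^ B)%N%:R * (S%:R / A%:R) ^+ r.
Proof.
move=> A0 rB; rewrite -{2}(subnKC rB) expnD !natrM !natrX expr_div_n.
have : (A%:R : rat) ^+ r != 0 by rewrite expf_neq0 // pnatr_eq0 -lt0n.
move=> h; field; exact: h.
Qed.

Lemma per_x (aT bT : finGroupType) (p d : nat) (x : bT) : prime p -> (forall y : aT, (#[y]%g %| p ^ d)%N) ->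
  \sum_(f : {ffun bT -> aT}) (#[((f, x) : aT \wr bT)]%g)%:R =
  (#|aT| ^ #|bT|)%N%:R * ((#[x]%g)%:R * ((p%:R : rat) ^+ d - (p%:R - 1) * \sum_(m < d) p%:R ^+ m *
     ((#|[set g : aT | (g ^+ (p ^ m) == 1)%g]|)%:R / #|aT|%:R) ^+ (#|bT| %/ #[x]%g))).
Proof.
move=> pp hexp; under eq_bigr do rewrite (per_elem _ _ pp hexp).
rewrite -mulr_sumr sumrB sumr_const card_ffun -mulr_sumr exchange_big /=.
have E : forall m : 'I_d, \sum_(f : {ffun bT -> aT}) (p%:R : rat) ^+ m *
      [forall c, gprod x f c \in [set g : aT | (g ^+ (p ^ m) == 1)%g]]%:R =
    p%:R ^+ m * ((#|aT| ^ #|bT|)%N%:R *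
      ((#|[set g : aT | (g ^+ (p ^ m) == 1)%g]|)%:R / #|aT|%:R) ^+ (#|bT| %/ #[x]%g)).
  move=> m; rewrite -mulr_sumr sum_ind.
  set S := [set g : aT | _].
  have hS : forall y z : aT, ((y ^ z)%g \in S) = (y \in S).
    by move=> y z; rewrite !inE -conjXg conjg_eq1.
  rewrite (count_S x hS) pow_split ?leq_div //.
  by rewrite lt0n; apply/eqP => /eqP; rewrite -cardsT cards_eq0 => /eqP E; have := in_setT (1%g : aT); rewrite E inE.
under eq_bigr do rewrite E mulrCA.
rewrite -mulr_sumr -mulr_natr; ring.
Qed.

End Aux.
Import Aux.

Theorem theorem2 (p a b d : nat) (aT bT : finGroupType)
  (pr_p : prime p) (cardA : #|aT| = p ^ a) (cardB : #|bT| = p ^ b)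
  (a_ge1 : 1 <= a) (b_ge1 : 1 <= b)
  (hd : p ^ d = \max_(g : aT) #[g]%g) :
  let s := fun m : nat => #|[set g : aT | (g ^+ m == 1)%g]| in
  let dn := fun n : nat => #|[set g : bT | #[g]%g == n]| in
  let k := fun n : nat =>
    ((dn (p ^ (b - n))%N)%:R / (p ^ n)%N%:R / avg_order bT)%R : rat in
  [/\ avg_order (aT \wr bT) =
        (p%:R ^+ d * avg_order bT
         - (p%:R - 1) * avg_order bT *
           \sum_(n < b.+1) k n *
             \sum_(m < d) p%:R ^+ m * ((s (p ^ m)%N)%:R / p%:R ^+ a) ^+ (p ^ n)%N)%R,
      (forall n : nat, (n <= b)%N -> (0 <= k n)%R)
    & (\sum_(n < b.+1) k n = 1)%R].
Proof.
Local Open Scope ring_scope.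
move=> s dn k.
have p1 := prime_gt1 pr_p; have p0 : (0 < p)%N := ltnW p1.
have hexp : forall y : aT, (#[y]%g %| p ^ d)%N.
  move=> y; have [e ea ye] := order_pexp y pr_p cardA.
  rewrite ye dvdn_Pexp2l // -(leq_exp2l _ _ p1) -ye hd.
  exact: (leq_bigmax (F := fun g : aT => #[g]%g)).
have pn0 : forall n, ((p ^ n)%N%:R : rat) != 0 by move=> n; rewrite pnatr_eq0 -lt0n expn_gt0 p0.
pose c n := ((dn (p ^ (b - n))%N)%:R * (p ^ (b - n))%N%:R : rat).
have R1 : \sum_(x : bT) ((#[x]%g)%:R : rat) = \sum_(n < b.+1) c n.
  have := regroup (fun=> 1) pr_p cardB.
  rewrite (eq_bigr (fun x => (#[x]%g)%:R)) => [->|x _]; last by rewrite mulr1.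
  by apply: eq_bigr => n _; rewrite mulr1.
set aB := avg_order bT.
have aBE : aB = (\sum_(n < b.+1) c n) / (p ^ b)%N%:R.
  by rewrite /aB /avg_order natr_sum R1 cardB.
have aB0 : aB != 0.
  rewrite /aB /avg_order mulf_neq0 ?invr_eq0 ?pnatr_eq0 -?lt0n ?cardB ?expn_gt0 ?p0 //.
  rewrite (bigD1 1%g) //= addn_gt0 order_gt0 //.
have kE : forall n, (n <= b)%N -> k n * aB = c n / (p ^ b)%N%:R.
  move=> n nb; rewrite /k divfK // /c.
  have -> : (p ^ b)%N = (p ^ (b - n) * p ^ n)%N by rewrite -expnD subnK.
  rewrite natrM; by field; rewrite pn0 pn0.
pose T r := \sum_(m < d) (p%:R : rat) ^+ m * ((s (p ^ m)%N)%:R / p%:R ^+ a) ^+ r.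
have LHS_E : avg_order (aT \wr bT) =
    (\sum_(n < b.+1) c n * (p%:R ^+ d - (p%:R - 1) * T (p ^ n)%N)) / (p ^ b)%N%:R.
  rewrite wr_avg wr_sum.
  have -> : \sum_(x : bT) \sum_(f : {ffun bT -> aT}) ((#[((f, x) : aT \wr bT)]%g)%:R : rat) =
      (#|aT| ^ #|bT|)%N%:R * \sum_(x : bT) (#[x]%g)%:R * (p%:R ^+ d - (p%:R - 1) * T (#|bT| %/ #[x]%g)%N).
    rewrite mulr_sumr; apply: eq_bigr => x _; rewrite (per_x x pr_p hexp).
    by rewrite /T cardA !natrX.
  rewrite (regroup (fun r => p%:R ^+ d - (p%:R - 1) * T r) pr_p cardB) natrM -cardB.
  have K0 : ((#|aT| ^ #|bT|)%N%:R : rat) != 0 by rewrite pnatr_eq0 -lt0n expn_gt0 cardA expn_gt0 p0.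
  by field; rewrite K0 cardB pn0.
have RHS_E : p%:R ^+ d * aB - (p%:R - 1) * aB * \sum_(n < b.+1) k n * T (p ^ n)%N =
    (\sum_(n < b.+1) c n * (p%:R ^+ d - (p%:R - 1) * T (p ^ n)%N)) / (p ^ b)%N%:R.
  rewrite -mulrA mulr_sumr.
  under eq_bigr => n _ do rewrite mulrA (mulrC aB) (kE n (ltn_ord n)).
  rewrite aBE !mulr_suml !mulr_sumr -sumrB; apply: eq_bigr => n _; ring.
split.
- by rewrite LHS_E -RHS_E.
- have aBp : 0 <= aB.
    by rewrite aBE divr_ge0 ?ler0n // sumr_ge0 // => i _; rewrite /c mulr_ge0 ?ler0n.
  by move=> n nb; rewrite /k !divr_ge0 ?ler0n.
- apply: (mulIf aB0); rewrite mul1r mulr_suml.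
  rewrite (eq_bigr (fun n : 'I_b.+1 => c n / (p ^ b)%N%:R)) => [|n _]; last by rewrite kE // -ltnS.
  by rewrite aBE mulr_suml.
Qed.
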